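(* Let $d\ge2$, $n=3$, and let $f$ be a stable update function. For a configuration $\mathcal U^{(t)}$ of three opinions define $P^{(t)}:=\gamma_{12}^{(t)}+\gamma_{13}^{(t)}+\gamma_{23}^{(t)}$. If $\mathcal U^{(t+1)}$ is obtained from $\mathcal U^{(t)}$ by any single interaction, then $P^{(t+1)}\le P^{(t)}$.
   Context: Opinions are unit vectors in $\mathbb R^d$; a configuration is a tuple $(\vec u_1,\vec u_2,\vec u_3)$, $A_{ij}=\langle\vec u_i,\vec u_j\rangle$. An interaction $(i,j)$, $i\ne j$, replaces $\vec u_i$ by $\vec w/\|\vec w\|$ with $\vec w=\vec u_i+f(A_{ij})\vec u_j$, leaving other opinions unchanged. $f:[-1,1]\to\mathbb R$ is stable if continuous and $\operatorname{sign}f(A)=\operatorname{sign}A$ for all $A$. The angle is $\alpha(\vec u,\vec v)=\arccos\langle\vec u,\vec v\rangle\in[0,\pi]$ and the effective angle is $\gamma(\vec u,\vec v)=\min(\alpha(\vec u,\vec v),\pi-\alpha(\vec u,\vec v))$; $\gamma_{ij}^{(t)}=\gamma(\vec u_i^{(t)},\vec u_j^{(t)})$. *)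

(* Defs.v *)
From HB Require Import structures.
From mathcomp Require Import all_boot all_order all_algebra.
From mathcomp Require Import all_classical all_reals all_analysis.
Set Implicit Arguments. Unset Strict Implicit. Unset Printing Implicit Defensive.
Import Order.TTheory GRing.Theory Num.Theory.
Import numFieldNormedType.Exports.
Local Open Scope ring_scope.
Local Open Scope classical_set_scope.

Section Opinions.
Variable R : realType.

Definition dotp (d : nat) (u v : 'rV[R]_d) : R := \sum_(k < d) u 0 k * v 0 k.

Definition enorm (d : nat) (u : 'rV[R]_d) : R := Num.sqrt (dotp u u).

Definition unit_vec (d : nat) (u : 'rV[R]_d) : Prop := dotp u u = 1.

Definition config (d : nat) := 'I_3 -> 'rV[R]_d.

Definition is_config (d : nat) (U : config d) : Prop := forall k, unit_vec (U k).

Definition stable (f : R -> R) : Prop :=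
  {within `[-1, 1], continuous f} /\
  (forall A, -1 <= A <= 1 -> Num.sg (f A) = Num.sg A).

Definition angle (d : nat) (u v : 'rV[R]_d) : R := acos (dotp u v).
Definition eff_angle (d : nat) (u v : 'rV[R]_d) : R :=
  Num.min (angle u v) (pi - angle u v).

Definition interaction_w (f : R -> R) (d : nat) (U : config d) (i j : 'I_3)
  : 'rV[R]_d := U i + f (dotp (U i) (U j)) *: U j.

Definition interact (f : R -> R) (d : nat) (U : config d) (i j : 'I_3)
  : config d :=
  fun k => if k == i then (enorm (interaction_w f U i j))^-1 *: interaction_w f U i j
           else U k.

(* P = gamma_12 + gamma_13 + gamma_23 (0-based indices) *)
Definition potP (d : nat) (U : config d) : R :=
  eff_angle (U 0) (U 1) + eff_angle (U 0) (U 2%:R) + eff_angle (U 1) (U 2%:R).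

End Opinions.

(* Main.v *)
Require Import Defs.
From HB Require Import structures.
From mathcomp Require Import all_boot all_order all_algebra.
From mathcomp Require Import all_classical all_reals all_analysis.
From mathcomp Require Import ring lra.
Import Order.TTheory GRing.Theory Num.Theory.
Local Open Scope ring_scope.

Lemma dotpC {R : realType} {d : nat} (u v : 'rV[R]_d) : dotp u v = dotp v u.
Proof. by rewrite /dotp; apply: eq_bigr => k _; rewrite mulrC. Qed.

Lemma dotpDl {R : realType} {d : nat} (u v w : 'rV[R]_d) : dotp (u + v) w = dotp u w + dotp v w.
Proof. by rewrite /dotp -big_split; apply: eq_bigr => k _; rewrite !mxE mulrDl. Qed.

Lemma dotpZl {R : realType} {d : nat} (a : R) (u w : 'rV[R]_d) : dotp (a *: u) w = a * dotp u w.
Proof. by rewrite /dotp mulr_sumr; apply: eq_bigr => k _; rewrite !mxE mulrA. Qed.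

Lemma dotpNl {R : realType} {d : nat} (u w : 'rV[R]_d) : dotp (- u) w = - dotp u w.
Proof. by rewrite -scaleN1r dotpZl mulN1r. Qed.

Lemma dotpDr {R : realType} {d : nat} (u v w : 'rV[R]_d) : dotp w (u + v) = dotp w u + dotp w v.
Proof. by rewrite dotpC dotpDl !(dotpC w). Qed.

Lemma dotpZr {R : realType} {d : nat} (a : R) (u w : 'rV[R]_d) : dotp w (a *: u) = a * dotp w u.
Proof. by rewrite dotpC dotpZl dotpC. Qed.

Lemma dotpNr {R : realType} {d : nat} (u w : 'rV[R]_d) : dotp w (- u) = - dotp w u.
Proof. by rewrite dotpC dotpNl dotpC. Qed.

Lemma dotp_ge0 {R : realType} {d : nat} (u : 'rV[R]_d) : 0 <= dotp u u.
Proof. by apply: sumr_ge0 => k _; rewrite -expr2 sqr_ge0. Qed.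

Lemma CS {R : realType} {d : nat} (a b : 'rV[R]_d) : dotp a b ^+ 2 <= dotp a a * dotp b b.
Proof.
have H : 0 <= \sum_(i < d) \sum_(j < d) (a 0 i * b 0 j - a 0 j * b 0 i) ^+ 2.
  by apply: sumr_ge0 => i _; apply: sumr_ge0 => j _; rewrite sqr_ge0.
have E1 : dotp a a * dotp b b = \sum_(i < d) \sum_(j < d) (a 0 i ^+ 2 * b 0 j ^+ 2).
  rewrite /dotp mulr_suml; apply: eq_bigr => i _; rewrite mulr_sumr.
  by apply: eq_bigr => j _; ring.
have E2 : dotp a b ^+ 2 = \sum_(i < d) \sum_(j < d) (a 0 i * b 0 i * (a 0 j * b 0 j)).
  rewrite /dotp expr2 mulr_suml; apply: eq_bigr => i _; rewrite mulr_sumr.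
  by apply: eq_bigr => j _.
have E3 : \sum_(i < d) \sum_(j < d) (a 0 i * b 0 j - a 0 j * b 0 i) ^+ 2 =
   \sum_(i < d) \sum_(j < d) (a 0 i ^+ 2 * b 0 j ^+ 2)
 + \sum_(i < d) \sum_(j < d) (a 0 j ^+ 2 * b 0 i ^+ 2)
 - (\sum_(i < d) \sum_(j < d) (a 0 i * b 0 i * (a 0 j * b 0 j))) *+ 2.
  rewrite -sumrMnl -big_split -sumrB; apply: eq_bigr => i _.
  rewrite -sumrMnl -big_split -sumrB; apply: eq_bigr => j _.
  rewrite /= !mulr2n; ring.
have E4 : \sum_(i < d) \sum_(j < d) (a 0 j ^+ 2 * b 0 i ^+ 2) =
   \sum_(i < d) \sum_(j < d) (a 0 i ^+ 2 * b 0 j ^+ 2) by rewrite exchange_big.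
rewrite E4 in E3.
rewrite E3 in H; rewrite E1 E2; lra.
Qed.

Lemma CSabs {R : realType} {d : nat} (a b : 'rV[R]_d) :
  `|dotp a b| <= Num.sqrt (dotp a a) * Num.sqrt (dotp b b).
Proof.
rewrite -sqrtrM ?dotp_ge0 // -sqrtr_sqr ler_sqrt ?CS //.
by apply: mulr_ge0; apply: dotp_ge0.
Qed.

Lemma acosKb {R : realType} (x : R) : -1 <= x <= 1 -> cos (acos x) = x.
Proof. by move=> hx; apply: acosK; rewrite in_itv /=. Qed.

Lemma cosKb {R : realType} (x : R) : 0 <= x <= pi -> acos (cos x) = x.
Proof. by move=> hx; apply: cosK; rewrite in_itv /=. Qed.

Lemma acos_le_of_cos {R : realType} (z t : R) : -1 <= z <= 1 -> 0 <= t <= pi ->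
  cos t <= z -> acos z <= t.
Proof.
move=> hz ht hc; rewrite leNgt; apply/negP => hlt.
have ha : acos z \in `[0, pi] by rewrite in_itv /= acos_ge0 // acos_lepi.
have ht' : t \in `[0, pi] by rewrite in_itv /=.
have : cos (acos z) < cos t by rewrite (ltr_cos ht' ha).
rewrite acosKb // => hh.
by move: hc; rewrite leNgt hh.
Qed.

Lemma cos_acosD {R : realType} (x y : R) : -1 <= x <= 1 -> -1 <= y <= 1 ->
  cos (acos x + acos y) = x * y - Num.sqrt (1 - x ^+ 2) * Num.sqrt (1 - y ^+ 2).
Proof. by move=> hx hy; rewrite cosD !acosKb // !sin_acos. Qed.

Lemma acos_le_pihalf {R : realType} (x : R) : 0 <= x <= 1 -> acos x <= pi / 2.
Proof.
move=> /andP[h0 h1]; apply: acos_le_of_cos.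
- by rewrite h1 andbT; apply: le_trans h0; rewrite lerN10.
- by rewrite divr_ge0 ?pi_ge0 //= ler_pdivrMr // ler_peMr ?pi_ge0 // ler1n.
- by rewrite cos_pihalf.
Qed.

Lemma eff_acos {R : realType} (x : R) : -1 <= x <= 1 ->
  Num.min (acos x) (pi - acos x) = acos `|x|.
Proof.
move=> hx; have [hx0|hx0] := lerP 0 x.
  rewrite ger0_norm //; apply: min_l.
  have h : acos x <= pi / 2 by apply: acos_le_pihalf; rewrite hx0; case/andP: hx.
  have : pi / 2 + pi / 2 = pi :> R by field.
  lra.
rewrite ltr0_norm // acosN //; apply: min_r.
have h : acos (- x) <= pi / 2.
  apply: acos_le_pihalf; case/andP: hx => h1 h2; apply/andP; split; lra.
rewrite acosN // in h.
have : pi / 2 + pi / 2 = pi :> R by field.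
lra.
Qed.

Lemma tri_scalar {R : realType} (x y z : R) : 0 <= x <= 1 -> 0 <= y <= 1 -> -1 <= z <= 1 ->
  x * y - Num.sqrt (1 - x ^+ 2) * Num.sqrt (1 - y ^+ 2) <= z ->
  acos z <= acos x + acos y.
Proof.
move=> hx hy hz hc.
have hx' : -1 <= x <= 1 by case/andP: hx => h1 h2; apply/andP; split; lra.
have hy' : -1 <= y <= 1 by case/andP: hy => h1 h2; apply/andP; split; lra.
have [hs|hs] := lerP (acos x + acos y) pi.
  apply: acos_le_of_cos => //.
    by rewrite hs andbT addr_ge0 // acos_ge0.
  by rewrite cos_acosD.
by apply: le_trans (ltW hs); apply: acos_lepi.
Qed.

Lemma geo_ab {R : realType} (a b : R) : 0 <= a <= 1 -> 0 <= b ->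
  acos ((1 + a * b) / Num.sqrt (1 + a * b * 2 + b ^+ 2))
  + acos ((a + b) / Num.sqrt (1 + a * b * 2 + b ^+ 2)) = acos a.
Proof.
move=> /andP[ha0 ha1] hb.
set M := 1 + a * b * 2 + b ^+ 2.
have hM : 1 <= M by rewrite /M; nra.
set N := Num.sqrt M.
have hN : 0 < N by rewrite sqrtr_gt0; lra.
have hN2 : N ^+ 2 = M by rewrite sqr_sqrtr //; lra.
set s := Num.sqrt (1 - a ^+ 2).
have hs : 0 <= s by apply: sqrtr_ge0.
have hs2 : s ^+ 2 = 1 - a ^+ 2 by rewrite sqr_sqrtr //; nra.
set p := (1 + a * b) / N.
set q := (a + b) / N.
have hp0 : 0 <= p by rewrite /p divr_ge0 //; nra.
have hq0 : 0 <= q by rewrite /q divr_ge0 //; nra.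
have hNn : N != 0 by rewrite gt_eqF.
have hp2 : 1 - p ^+ 2 = (b * s / N) ^+ 2.
  rewrite /p !expr_div_n exprMn hN2 hs2 /M; field; rewrite gt_eqF //; rewrite /M in hM; lra.
have hq2 : 1 - q ^+ 2 = (s / N) ^+ 2.
  rewrite /q !expr_div_n hN2 hs2 /M; field; rewrite gt_eqF //; rewrite /M in hM; lra.
have hbs : 0 <= b * s / N by rewrite divr_ge0 ?mulr_ge0 // ltW.
have hsN : 0 <= s / N by rewrite divr_ge0 // ltW.
have hp1 : p <= 1 by nra.
have hq1 : q <= 1 by nra.
have hp' : -1 <= p <= 1 by apply/andP; split; lra.
have hq' : -1 <= q <= 1 by apply/andP; split; lra.
have hsp : Num.sqrt (1 - p ^+ 2) = b * s / N by rewrite hp2 sqrtr_sqr ger0_norm.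
have hsq : Num.sqrt (1 - q ^+ 2) = s / N by rewrite hq2 sqrtr_sqr ger0_norm.
have hc : cos (acos p + acos q) = a.
  rewrite cos_acosD // hsp hsq /p /q.
  have -> : (1 + a * b) / N * ((a + b) / N) - b * s / N * (s / N)
     = ((1 + a * b) * (a + b) - b * s ^+ 2) / N ^+ 2 by field.
  rewrite hN2 hs2 /M; field; rewrite gt_eqF //; rewrite /M in hM; lra.
have h1 : acos p <= pi / 2 by apply: acos_le_pihalf; rewrite hp0 hp1.
have h2 : acos q <= pi / 2 by apply: acos_le_pihalf; rewrite hq0 hq1.
have g1 : 0 <= acos p by apply: acos_ge0.
have g2 : 0 <= acos q by apply: acos_ge0.
have hpi : pi / 2 + pi / 2 = pi :> R by field.
rewrite -hc cosKb //; apply/andP; split; lra.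
Qed.

Lemma unit_dot_bd {R : realType} {d : nat} (u v : 'rV[R]_d) :
  unit_vec u -> unit_vec v -> -1 <= dotp u v <= 1.
Proof.
rewrite /unit_vec => hu hv; have := CS u v; rewrite hu hv mulr1 => h.
apply/andP; split; nra.
Qed.

Lemma eff_dot {R : realType} {d : nat} (u v : 'rV[R]_d) :
  unit_vec u -> unit_vec v -> eff_angle u v = acos `|dotp u v|.
Proof. by move=> hu hv; rewrite /eff_angle /angle eff_acos // unit_dot_bd. Qed.

Lemma eff_sym {R : realType} {d : nat} (u v : 'rV[R]_d) :
  eff_angle u v = eff_angle v u.
Proof. by rewrite /eff_angle /angle dotpC. Qed.

Lemma unitN {R : realType} {d : nat} (u : 'rV[R]_d) : unit_vec u -> unit_vec (- u).
Proof. by rewrite /unit_vec dotpNl dotpNr opprK. Qed.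

Lemma vec_tri {R : realType} {d : nat} (u v w : 'rV[R]_d) :
  unit_vec u -> unit_vec v -> unit_vec w ->
  dotp u v * dotp v w - Num.sqrt (1 - dotp u v ^+ 2) * Num.sqrt (1 - dotp v w ^+ 2)
  <= dotp u w.
Proof.
rewrite /unit_vec => hu hv hw.
set x := dotp u v; set y := dotp v w.
have h := CSabs (u - x *: v) (w - y *: v).
have e1 : dotp (u - x *: v) (w - y *: v) = dotp u w - x * y.
  rewrite !(dotpDl, dotpDr, dotpNl, dotpNr, dotpZl, dotpZr) hv -/x -/y.
  ring.
have e2 : dotp (u - x *: v) (u - x *: v) = 1 - x ^+ 2.
  rewrite !(dotpDl, dotpDr, dotpNl, dotpNr, dotpZl, dotpZr) hv hu (dotpC v u) -/x; ring.
have e3 : dotp (w - y *: v) (w - y *: v) = 1 - y ^+ 2.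
  rewrite !(dotpDl, dotpDr, dotpNl, dotpNr, dotpZl, dotpZr) hv hw (dotpC w v) -/y; ring.
rewrite e1 e2 e3 in h.
have := ler_norm (- (dotp u w - x * y)); rewrite normrN.
lra.
Qed.

Lemma eff_tri {R : realType} {d : nat} (u v w : 'rV[R]_d) :
  unit_vec u -> unit_vec v -> unit_vec w ->
  eff_angle u w <= eff_angle u v + eff_angle v w.
Proof.
move=> hu hv hw; rewrite !eff_dot //.
have h1 := vec_tri _ _ _ hu hv hw.
have h2 := vec_tri _ _ _ (unitN _ hu) hv hw.
rewrite !dotpNl sqrrN in h2.
have bx := unit_dot_bd _ _ hu hv; have by0 := unit_dot_bd _ _ hv hw; have bz := unit_dot_bd _ _ hu hw.
apply: tri_scalar.
- by rewrite normr_ge0 /= ler_norml.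
- by rewrite normr_ge0 /= ler_norml.
- by rewrite (le_trans _ (normr_ge0 _)) ?lerN10 //= ler_norml.
have ex : `|dotp u v| ^+ 2 = dotp u v ^+ 2 by rewrite real_normK ?num_real.
have ey : `|dotp v w| ^+ 2 = dotp v w ^+ 2 by rewrite real_normK ?num_real.
rewrite ex ey -normrM.
move: h1 h2; set S := _ * Num.sqrt _; set x := dotp u v; set y := dotp v w; set z := dotp u w.
move=> h1 h2.
have nz1 := ler_norm z; have nz2 : - z <= `|z| by rewrite -normrN ler_norm.
have [hp|hn] := lerP 0 (x * y).
  rewrite ger0_norm //; lra.
rewrite ltr0_norm //; lra.
Qed.

Lemma normD_same {R : realType} (A c : R) : 0 <= c * A -> `|A + c| = `|A| + `|c|.
Proof.
move=> h.
have [hA|hA] := lerP 0 A; have [hc|hc] := lerP 0 c.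
- by rewrite !ger0_norm // addr_ge0.
- have -> : A = 0 by nra.
  by rewrite add0r normr0 add0r.
- have -> : c = 0 by nra.
  by rewrite addr0 normr0 addr0.
- rewrite !ltr0_norm //; [ring | lra].
Qed.

Lemma geo_vec {R : realType} {d : nat} (ui uj : 'rV[R]_d) (c : R) :
  unit_vec ui -> unit_vec uj -> 0 <= c * dotp ui uj ->
  unit_vec ((enorm (ui + c *: uj))^-1 *: (ui + c *: uj)) /\
  eff_angle ((enorm (ui + c *: uj))^-1 *: (ui + c *: uj)) ui
  + eff_angle ((enorm (ui + c *: uj))^-1 *: (ui + c *: uj)) uj
  <= eff_angle ui uj.
Proof.
move=> hu hv hcA; move: (hu) (hv); rewrite /unit_vec => hu1 hv1.
set w := ui + c *: uj; set A := dotp ui uj.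
have hAb := unit_dot_bd _ _ hu hv.
have hww : dotp w w = 1 + `|A| * `|c| * 2 + `|c| ^+ 2.
  rewrite /w !(dotpDl, dotpDr, dotpZl, dotpZr) hu1 hv1 (dotpC uj ui) -/A.
  rewrite -normrM real_normK ?num_real // ger0_norm; last by rewrite mulrC.
  ring.
have hM : 1 <= dotp w w by rewrite hww; have := normr_ge0 A; have := normr_ge0 c; nra.
set N := enorm w.
have hN : 0 < N by rewrite /N /enorm sqrtr_gt0; lra.
have hN2 : N ^+ 2 = dotp w w by rewrite /N /enorm sqr_sqrtr //; lra.
have hNn : N != 0 by rewrite gt_eqF.
have hunit : unit_vec (N^-1 *: w).
  rewrite /unit_vec dotpZl dotpZr -hN2; field; exact: hNn.
split => //.
have hNi : 0 <= N^-1 by rewrite invr_ge0 ltW.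
rewrite !eff_dot //.
have e1 : `|dotp (N^-1 *: w) ui| = (1 + `|A| * `|c|) / N.
  rewrite dotpZl /w dotpDl dotpZl hu1 (dotpC uj ui) -/A normrM.
  rewrite (ger0_norm hNi) ger0_norm.
    rewrite -normrM ger0_norm; last by rewrite mulrC.
    rewrite (mulrC A); ring.
  have hcA' : 0 <= c * A by exact: hcA.
  lra.
have e2 : `|dotp (N^-1 *: w) uj| = (`|A| + `|c|) / N.
  rewrite dotpZl /w dotpDl dotpZl hv1 -/A normrM mulr1 (ger0_norm hNi) normD_same //.
  by rewrite mulrC.
rewrite e1 e2 -/A /N /enorm hww geo_ab //.
by rewrite normr_ge0 /= ler_norml.
Qed.

Lemma step {R : realType} {d : nat} (ui uj uk ui' : 'rV[R]_d) :
  unit_vec ui -> unit_vec uj -> unit_vec uk -> unit_vec ui' ->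
  eff_angle ui' ui + eff_angle ui' uj <= eff_angle ui uj ->
  eff_angle ui' uj + eff_angle ui' uk <= eff_angle ui uj + eff_angle ui uk.
Proof.
move=> hi hj hk hi' h.
have := eff_tri _ _ _ hi' hi hk.
lra.
Qed.

Lemma ord3_cases (i : 'I_3) : i = 0 \/ i = 1 \/ i = 2%:R.
Proof.
case: i => [[|[|[|i]]] Hi].
- by left; apply: val_inj.
- by right; left; apply: val_inj.
- by right; right; apply: val_inj.
- by [].
Qed.

Theorem mainTheorem17 (R : realType) (d : nat) (f : R -> R)
  (U : config R d) (i j : 'I_3) :
  (2 <= d)%N -> stable f -> is_config U -> i != j ->
  interaction_w f U i j != 0 ->
  potP (interact f U i j) <= potP U.
Proof.
move=> _ [_ hsg] hU hij _.
have hAb := unit_dot_bd _ _ (hU i) (hU j).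
have hcA : 0 <= f (dotp (U i) (U j)) * dotp (U i) (U j).
  by rewrite -sgr_ge0 sgrM hsg // -expr2 sqr_ge0.
have [hu' hg] := geo_vec _ _ _ (hU i) (hU j) hcA.
have key : forall k, eff_angle ((enorm (U i + f (dotp (U i) (U j)) *: U j))^-1 *: (U i + f (dotp (U i) (U j)) *: U j)) (U j)
   + eff_angle ((enorm (U i + f (dotp (U i) (U j)) *: U j))^-1 *: (U i + f (dotp (U i) (U j)) *: U j)) (U k)
   <= eff_angle (U i) (U j) + eff_angle (U i) (U k).
  by move=> k; apply: step (hU i) (hU j) (hU k) hu' hg.
suff H : forall (i j : 'I_3) (V : config R d) (v : 'rV_d), i != j ->
    (forall k, eff_angle v (U j) + eff_angle v (U k) <= eff_angle (U i) (U j) + eff_angle (U i) (U k)) ->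
    V i = v -> (forall k, k != i -> V k = U k) -> potP V <= potP U.
  apply: (H i j _ _ hij key); first by rewrite /interact eqxx.
  by move=> k hk; rewrite /interact (negbTE hk).
clear -hU => i j V v hij key Ei Ek.
have es := @eff_sym R d.
have [Ei0|[Ei0|Ei0]] := ord3_cases i; have [Ej0|[Ej0|Ej0]] := ord3_cases j;
  subst i j => //; rewrite /potP Ei !Ek //.
all: have h0 := key 0; have h1 := key 1; have h2 := key 2%:R.
all: rewrite ?(es (U 0) v) ?(es (U 1) v) ?(es (U 2%:R) v) ?(es (U 1) (U 0))
  ?(es (U 2%:R) (U 0)) ?(es (U 2%:R) (U 1)) in h0 h1 h2 *.
all: lra.
Qed.
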